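(* For each integer $n\geq 4$, $prc(W_n)=n$, where $W_n$ is the wheel on $n+1$ vertices.
   Context: The wheel $W_n=C_n+K_1$ is the join of a cycle $C_n$ with a single vertex (adjacent to all cycle vertices). A path in an edge-coloured graph is a rainbow path if its edges receive pairwise distinct colours. The proper rainbow connection number $prc(G)$ is the minimum number of colours in a proper edge-colouring (adjacent edges get distinct colours) such that every two distinct vertices are joined by a rainbow path. *)

(* Defs.v *)
From mathcomp Require Import all_boot.
Set Implicit Arguments. Unset Strict Implicit. Unset Printing Implicit Defensive.

(* Graphs: vertex set a finType T, adjacency a symmetric irreflexive rel. *)

(* An edge colouring with (at most) k colours: a colour c x y : 'I_k for every
   edge xy, independent of orientation (values on non-edges are irrelevant). *)
Definition edge_colouring (T : finType) (e : rel T) (k : nat)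
  (c : T -> T -> 'I_k) : Prop :=
  forall x y, e x y -> c x y = c y x.

Definition proper_colouring (T : finType) (e : rel T) (k : nat)
  (c : T -> T -> 'I_k) : Prop :=
  forall x y z, e x y -> e x z -> y != z -> c x y != c x z.

(* x :: p is a path from x to y (distinct vertices, consecutive adjacent)
   whose edges have pairwise distinct colours. *)
Definition rainbow_path (T : finType) (e : rel T) (k : nat)
  (c : T -> T -> 'I_k) (x y : T) (p : seq T) : Prop :=
  [/\ path e x p, last x p = y, uniq (x :: p) & uniq (pairmap c x p)].

Definition rainbow_connected (T : finType) (e : rel T) (k : nat)
  (c : T -> T -> 'I_k) : Prop :=
  forall x y : T, x != y -> exists p, rainbow_path e c x y p.

Definition prc_colourable (T : finType) (e : rel T) (k : nat) : Prop :=
  exists c : T -> T -> 'I_k,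
    [/\ edge_colouring e c, proper_colouring e c & rainbow_connected e c].

Definition is_prc (T : finType) (e : rel T) (k : nat) : Prop :=
  prc_colourable e k /\ (forall k', prc_colourable e k' -> k <= k').

(* The wheel W_n = C_n + K_1: vertices option 'I_n, None is the hub,
   Some i is the i-th cycle vertex, adjacent to Some (i +- 1 mod n). *)
Definition wheel_adj (n : nat) : rel (option 'I_n) :=
  fun u v =>
    match u, v with
    | None, None => false
    | None, Some _ | Some _, None => true
    | Some i, Some j => (j == (i.+1 %% n) :> nat) || (i == (j.+1 %% n) :> nat)
    end.
Arguments wheel_adj n : clear implicits.

(* Main.v *)
Require Import Defs.
From mathcomp Require Import all_boot.
From mathcomp Require Import zify.

Definition wcol (n : nat) (n0 : 0 < n) (x y : option 'I_n) : 'I_n :=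
  match x, y with
  | None, None => Ordinal n0
  | None, Some j => j
  | Some i, None => i
  | Some i, Some j =>
      if (j == i.+1 %% n :> nat) then Ordinal (ltn_pmod (i + 2) n0)
      else Ordinal (ltn_pmod (j + 2) n0)
  end.

Lemma lower (n k : nat) : prc_colourable (wheel_adj n) k -> n <= k.
Proof.
case=> c [_ pc _].
have inj : injective (fun i : 'I_n => c None (Some i)).
  move=> i j /eqP; apply: contraTeq => ij.
  by apply: pc => //; apply: contra ij => /eqP [->].
by have := leq_card _ inj; rewrite !card_ord.
Qed.

Lemma modS' (n x : nat) : x < n -> x.+1 %% n = if x.+1 == n then 0 else x.+1.
Proof.
move=> xn; case: eqP => [->|ne]; first by rewrite modnn.
by rewrite modn_small //; lia.
Qed.

Lemma mod2' (n x : nat) : 2 < n -> x < n -> (x + 2) %% n = if x + 2 < n then x + 2 else x + 2 - n.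
Proof.
move=> n2 xn; case: ifP => h; first by rewrite modn_small.
have -> : x + 2 = (x + 2 - n) + n by lia.
by rewrite modnDr modn_small //; lia.
Qed.

Ltac crush n4 :=
  repeat (case: ifP); intros;
  try (apply: val_inj); try (rewrite -(inj_eq val_inj)); simpl;
  repeat match goal with H : context [_ %% _] |- _ => move: H end;
  rewrite ?(modS' _ _ (ltn_ord _)) ?(mod2' _ _ n4 (ltn_ord _)) //;
  repeat (case: ifP => /=); intros; lia.

Theorem proposition5p2 (n : nat) : 4 <= n -> is_prc (wheel_adj n) n.
Proof.
move=> n4; split; last by move=> k; apply: lower.
have n0 : 0 < n by lia. have n2 : 2 < n by lia.
exists (@wcol n n0); split.
- case=> [a|] [b|] //= e; rewrite /wcol //; crush n2.
- case=> [a|] [b|] [c|] //= e1 e2 ne; rewrite /wcol;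
    rewrite -?(inj_eq val_inj) /=; try (by move: ne; rewrite -(inj_eq val_inj) /=);
    try (have ne' : (b : nat) != c by apply: contra ne => /eqP/val_inj ->); crush n2.
- case=> [a|] [b|] ne //.
  + case ab: (wheel_adj n (Some a) (Some b)).
      exists [:: Some b]; split => //=; first by move: ab => /= ->.
      by rewrite andbT !inE.
    exists [:: None; Some b]; split => //=.
    rewrite !inE /= andbT; apply/negP => /eqP [eab]; by rewrite eab eqxx in ne.
    rewrite !inE /= andbT; apply/negP => /eqP eab; by rewrite eab eqxx in ne.
  + by exists [:: None]; split.
  + by exists [:: Some b]; split.
Qed.
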